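(* Let $T(n) = (3n+1)/2^{v_2(3n+1)}$ for odd $n\ge1$, let $n_0$ be an odd positive integer with orbit $n_{t+1} = T(n_t)$, and let $X_t = \mathbf{1}[n_t \equiv 1 \pmod 4]$. Let $t \ge 1$ be a burst-to-gap transition, i.e. $X_{t-1} = 1$ and $X_t = 0$, and let $G \ge 1$ be the length of the gap run starting at $t$ (the number of consecutive indices $s \ge t$ with $X_s = 0$). Then $n_t \equiv 3 \pmod 4$, and moreover: (a) $G = 1$ if and only if $n_t \equiv 3 \pmod 8$; (b) $G \ge 2$ if and only if $n_t \equiv 7 \pmod 8$.
   Context: $v_2$ denotes the $2$-adic valuation. $X_t = 1$ is called a burst step and $X_t = 0$ a gap step; equivalently $X_t = \mathbf{1}[v_2(3n_t+1)\ge 2]$. *)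

(* Defs.v *)
From mathcomp Require Import all_boot.

Definition v2 (m : nat) : nat := logn 2 m.

Definition syrT (n : nat) : nat := (3 * n + 1) %/ 2 ^ (v2 (3 * n + 1)).

Definition syr_orbit (n0 t : nat) : nat := iter t syrT n0.

Definition burst (n0 t : nat) : bool := syr_orbit n0 t %% 4 == 1.

(* Main.v *)
Require Import Defs.
From mathcomp Require Import all_boot.
From mathcomp Require Import zify.

Lemma odd_div_v2 m : 0 < m -> odd (m %/ 2 ^ v2 m).
Proof.
move=> m0; rewrite /v2.
have D := pfactor_dvdnn 2 m.
apply/negP => /negP ev.
have H : 2 ^ (logn 2 m).+1 %| m.
  move: D ev; set k := logn 2 m => D ev; rewrite -(divnK D) expnS [X in _ %| X]mulnC [X in X %| _]mulnC dvdn_pmul2l ?expn_gt0 //.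
  by rewrite dvdn2.
by move: H; rewrite pfactor_dvdn // ltnn.
Qed.

Lemma odd_syrT n : odd (syrT n).
Proof. by apply: odd_div_v2; rewrite addn1. Qed.

Lemma odd_orbit n0 t : odd n0 -> odd (syr_orbit n0 t).
Proof. by case: t => [|t] //= _; apply: odd_syrT. Qed.

Lemma syrT3 n : n %% 4 = 3 -> syrT n = (3 * n + 1) %/ 2.
Proof.
move=> h; rewrite /syrT /v2.
have -> : 3 * n + 1 = 2 * (3 * (n %/ 4) * 2 + 5).
  by rewrite {1}(divn_eq n 4) h; lia.
rewrite lognM ?addn_gt0 ?orbT //.
have -> : logn 2 (3 * (n %/ 4) * 2 + 5) = 0.
  by apply: logn_coprime; rewrite coprime2n oddD oddM /= andbF.
by rewrite (@logn_prime 2 2).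
Qed.

Theorem lemma4p1 (n0 t G : nat) :
  odd n0 -> 0 < n0 ->
  1 <= t -> burst n0 t.-1 -> ~~ burst n0 t ->
  1 <= G ->
  (forall s, t <= s < t + G -> ~~ burst n0 s) ->
  burst n0 (t + G) ->
  syr_orbit n0 t %% 4 = 3 /\
  (G = 1 <-> syr_orbit n0 t %% 8 = 3) /\
  (2 <= G <-> syr_orbit n0 t %% 8 = 7).
Proof.
move=> on0 _ t1 _ nb G1 gap bG.
have ot := odd_orbit n0 t on0.
set n := syr_orbit n0 t in ot nb *.
have n2 : n %% 2 = 1 by rewrite modn2 ot.
have n4 : n %% 4 = 3.
  move: nb; rewrite /burst -/n => /eqP; lia.
have step : syr_orbit n0 t.+1 = (3 * n + 1) %/ 2.
  by rewrite -syrT3 // /syr_orbit iterS.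
have b1 : burst n0 t.+1 = ((3 * n + 1) %/ 2 %% 4 == 1).
  by rewrite /burst step.
have n8 : n %% 8 = 3 \/ n %% 8 = 7 by lia.
split=> //.
case: n8 => h.
- have bt : burst n0 t.+1 by rewrite b1; apply/eqP; lia.
  have G1' : G = 1.
    case: (ltnP 1 G) => // hG; last by lia.
    have : t <= t.+1 < t + G by apply/andP; split; lia.
    by move/gap; rewrite bt.
  by split; [split | split]; lia.
- have bt : ~~ burst n0 t.+1 by rewrite b1; apply/eqP; lia.
  have G2 : 2 <= G.
    case: (ltnP 1 G) => // hG.
    have eG : G = 1 by lia.
    by move: bG; rewrite eG addn1 (negbTE bt).
  by split; [split | split]; lia.
Qed.
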